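(* Let $\varepsilon>0$, $u\in\mathcal{SF}_\varepsilon$, and let $T^{\rm pos},T^{\rm neg}\in\mathcal{T}_\varepsilon(\mathbb{R}^2)$ be two triangles sharing a side (i.e. $\mathcal{H}^1(T^{\rm pos}\cap T^{\rm neg})=\varepsilon$) such that $\chi(u,T^{\rm pos})\ge0$ and $\chi(u,T^{\rm neg})\le0$. Then $F_\varepsilon(u,T^{\rm pos}\cup T^{\rm neg})\ge\tfrac53\varepsilon$.
   Context: Let $\hat e_1=(1,0)$, $\hat e_2=\tfrac12(1,\sqrt3)$, $\hat e_3=\tfrac12(-1,\sqrt3)$ and $\mathcal{L}=\{z_1\hat e_1+z_2\hat e_2\colon z_1,z_2\in\mathbb{Z}\}$, with sublattices $\mathcal{L}^1=\{z_1(\hat e_1+\hat e_2)+z_2(\hat e_2+\hat e_3)\colon z\in\mathbb{Z}^2\}$, $\mathcal{L}^2=\mathcal{L}^1+\hat e_1$, $\mathcal{L}^3=\mathcal{L}^1+\hat e_2$. $\mathcal{T}(\mathbb{R}^2)$ is the set of closed triangles $\mathrm{conv}\{i,j,k\}$, $i,j,k\in\mathcal L$ pairwise at distance 1; each has one vertex in each sublattice, labelled $i\in\mathcal{L}^1,j\in\mathcal{L}^2,k\in\mathcal{L}^3$. $\mathcal{L}_\varepsilon=\varepsilon\mathcal{L}$, $\mathcal{T}_\varepsilon(\mathbb{R}^2)=\varepsilon\mathcal{T}(\mathbb{R}^2)$, $\mathcal{T}_\varepsilon(A)=\{T\in\mathcal{T}_\varepsilon(\mathbb{R}^2)\colon T\subset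 A\}$. $\mathcal{SF}_\varepsilon=\{u\colon\mathcal{L}_\varepsilon\to\mathcal{S}^1\}$. $F_\varepsilon(u,T)=\varepsilon|u(\varepsilon i)+u(\varepsilon j)+u(\varepsilon k)|^2$ for $T=\mathrm{conv}\{\varepsilon i,\varepsilon j,\varepsilon k\}$, and $F_\varepsilon(u,A)=\sum_{T\in\mathcal{T}_\varepsilon(A)}F_\varepsilon(u,T)$. With $v\times w=v_1w_2-v_2w_1$, the chirality is $\chi(u,T)=\frac{2}{3\sqrt3}\big(u(\varepsilon i)\times u(\varepsilon j)+u(\varepsilon j)\times u(\varepsilon k)+u(\varepsilon k)\times u(\varepsilon i)\big)$. *)

(* Defs.v *)
From Stdlib Require Import Reals ZArith Lra.
Open Scope R_scope.

(* Points of the lattice L are encoded by their integer coordinates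
   (z1, z2) w.r.t. the basis e1 = (1,0), e2 = (1/2, sqrt 3 / 2). *)
Definition latpt := (Z * Z)%type.

Definition e1 : R * R := (1, 0).
Definition e2 : R * R := (1 / 2, sqrt 3 / 2).
Definition e3 : R * R := (- 1 / 2, sqrt 3 / 2).

Definition pos (p : latpt) : R * R :=
  (IZR (fst p) * fst e1 + IZR (snd p) * fst e2,
   IZR (fst p) * snd e1 + IZR (snd p) * snd e2).

Definition dist2 (x y : R * R) : R :=
  (fst x - fst y) ^ 2 + (snd x - snd y) ^ 2.

(* Sublattices: in lattice coordinates e1 + e2 = (1,1), e2 + e3 = (-1,2),
   e1 = (1,0), e2 = (0,1). *)
Definition inL1 (p : latpt) : Prop :=
  exists a b : Z, p = (a * 1 + b * (-1), a * 1 + b * 2)%Z.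
Definition inL2 (p : latpt) : Prop :=
  exists a b : Z, p = (a * 1 + b * (-1) + 1, a * 1 + b * 2 + 0)%Z.
Definition inL3 (p : latpt) : Prop :=
  exists a b : Z, p = (a * 1 + b * (-1) + 0, a * 1 + b * 2 + 1)%Z.

(* A triangle of T(R^2), given by its vertices labelled by sublattice:
   i in L^1, j in L^2, k in L^3, pairwise at (Euclidean) distance 1.
   The triangle of T_eps(R^2) is eps times conv{i,j,k}. *)
Record ltriangle : Type := Tri { ti : latpt; tj : latpt; tk : latpt }.

Definition is_triangle (T : ltriangle) : Prop :=
  inL1 (ti T) /\ inL2 (tj T) /\ inL3 (tk T) /\
  dist2 (pos (ti T)) (pos (tj T)) = 1 /\
  dist2 (pos (tj T)) (pos (tk T)) = 1 /\
  dist2 (pos (tk T)) (pos (ti T)) = 1.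

(* Two (distinct) triangles share a side: they have two common vertices
   (equivalently, H^1(T ∩ T') = eps). Common vertices necessarily carry
   the same sublattice label. *)
Definition share_side (T T' : ltriangle) : Prop :=
  T <> T' /\
  ((ti T = ti T' /\ tj T = tj T') \/
   (tj T = tj T' /\ tk T = tk T') \/
   (tk T = tk T' /\ ti T = ti T')).

(* Spin fields u : L_eps -> S^1, indexed by lattice coordinates
   (u p stands for u(eps p)). *)
Definition spin_field (u : latpt -> R * R) : Prop :=
  forall p, fst (u p) ^ 2 + snd (u p) ^ 2 = 1.

Definition vadd (v w : R * R) : R * R := (fst v + fst w, snd v + snd w).
Definition vnorm2 (v : R * R) : R := fst v ^ 2 + snd v ^ 2.
Definition cross (v w : R * R) : R := fst v * snd w - snd v * fst w.

Definition F_tri (eps : R) (u : latpt -> R * R) (T : ltriangle) : R :=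
  eps * vnorm2 (vadd (vadd (u (ti T)) (u (tj T))) (u (tk T))).

Definition chi (u : latpt -> R * R) (T : ltriangle) : R :=
  2 / (3 * sqrt 3) *
  (cross (u (ti T)) (u (tj T)) + cross (u (tj T)) (u (tk T)) +
   cross (u (tk T)) (u (ti T))).

(* Main.v *)
Require Import Defs.
From Stdlib Require Import Reals Lra Psatz.
Open Scope R_scope.

Lemma core (a1 a2 b1 b2 c1 c2 d1 d2 : R) :
  a1^2 + a2^2 = 1 -> b1^2 + b2^2 = 1 -> c1^2 + c2^2 = 1 -> d1^2 + d2^2 = 1 ->
  ((a1*b2 - a2*b1) + (b1*c2 - b2*c1) + (c1*a2 - c2*a1)) *
  ((a1*b2 - a2*b1) + (b1*d2 - b2*d1) + (d1*a2 - d2*a1)) <= 0 ->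
  (a1+b1+c1)^2 + (a2+b2+c2)^2 + ((a1+b1+d1)^2 + (a2+b2+d2)^2) >= 5/3.
Proof.
  intros Ha Hb Hc Hd HK.
  set (s1 := a1 + b1). set (s2 := a2 + b2).
  set (w1 := b1 - a1). set (w2 := b2 - a2).
  set (sg := s1^2 + s2^2).
  set (P := s1*c1 + s2*c2). set (Q := s1*d1 + s2*d2).
  assert (Hgoal : (s1+c1)^2 + (s2+c2)^2 + ((s1+d1)^2 + (s2+d2)^2)
                  = 2*sg + 2 + 2*P + 2*Q).
  { unfold sg, P, Q, s1, s2. nra. }
  rewrite Hgoal.
  assert (HP2 : P^2 <= sg).
  { unfold P, sg. pose proof (pow2_ge_0 (s1*c2 - s2*c1)).
    replace (s1^2+s2^2) with ((s1^2+s2^2)*(c1^2+c2^2)) by (rewrite Hc; ring). nra. }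
  assert (HQ2 : Q^2 <= sg).
  { unfold Q, sg. pose proof (pow2_ge_0 (s1*d2 - s2*d1)).
    replace (s1^2+s2^2) with ((s1^2+s2^2)*(d1^2+d2^2)) by (rewrite Hd; ring). nra. }
  assert (Hsw : s1*w1 + s2*w2 = 0). { unfold s1, s2, w1, w2. nra. }
  set (m := sg / 2).
  assert (Hm : s1*a1 + s2*a2 = m). { unfold m, sg, s1, s2. nra. }
  destruct (Req_dec (w1^2 + w2^2) 0) as [Hw0 | Hw0].
  - assert (w1 = 0) by nra. assert (w2 = 0) by nra.
    assert (b1 = a1) by (unfold w1 in *; lra).
    assert (b2 = a2) by (unfold w2 in *; lra).
    unfold Rge, sg, P, Q, s1, s2. subst b1 b2.
    pose proof (pow2_ge_0 (a1+c1)). pose proof (pow2_ge_0 (a2+c2)).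
    pose proof (pow2_ge_0 (a1+d1)). pose proof (pow2_ge_0 (a2+d2)). nra.
  - assert (Hwp : 0 < w1^2 + w2^2) by nra.
    set (K1 := (a1*b2 - a2*b1) + (b1*c2 - b2*c1) + (c1*a2 - c2*a1)) in HK.
    set (K2 := (a1*b2 - a2*b1) + (b1*d2 - b2*d1) + (d1*a2 - d2*a1)) in HK.
    set (X := w1*s2 - w2*s1).
    assert (E1 : (w1^2+w2^2) * (P - m) = X * K1 + (s1*w1+s2*w2) * (w1*(c1-a1) + w2*(c2-a2))).
    { rewrite <- Hm. unfold X, K1, P, w1, w2, s1, s2. ring. }
    assert (E2 : (w1^2+w2^2) * (Q - m) = X * K2 + (s1*w1+s2*w2) * (w1*(d1-a1) + w2*(d2-a2))).
    { rewrite <- Hm. unfold X, K2, Q, w1, w2, s1, s2. ring. }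
    rewrite Hsw in E1, E2.
    assert (Hprod : ((w1^2+w2^2) * (P - m)) * ((w1^2+w2^2) * (Q - m)) <= 0).
    { rewrite E1, E2. replace ((X*K1 + 0*(w1*(c1-a1)+w2*(c2-a2))) * (X*K2 + 0*(w1*(d1-a1)+w2*(d2-a2))))
        with (X^2 * (K1*K2)) by ring.
      pose proof (pow2_ge_0 X). nra. }
    assert (HPQ : (P - m) * (Q - m) <= 0).
    { replace (((w1^2+w2^2) * (P - m)) * ((w1^2+w2^2) * (Q - m))) with
        ((w1^2+w2^2)^2 * ((P - m) * (Q - m))) in Hprod by ring.
      assert (0 < (w1^2+w2^2)^2) by nra. nra. }
    unfold m in HPQ.
    destruct (Rle_dec (sg/2) P) as [HPm | HPm].
    + pose proof (pow2_ge_0 (Q+1/3)). nra.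
    + assert (sg/2 <= Q) by nra. pose proof (pow2_ge_0 (P+1/3)). nra.
Qed.

Lemma HH (x y z z' : R * R) :
  fst x ^ 2 + snd x ^ 2 = 1 -> fst y ^ 2 + snd y ^ 2 = 1 ->
  fst z ^ 2 + snd z ^ 2 = 1 -> fst z' ^ 2 + snd z' ^ 2 = 1 ->
  (cross x y + cross y z + cross z x) * (cross x y + cross y z' + cross z' x) <= 0 ->
  vnorm2 (vadd (vadd x y) z) + vnorm2 (vadd (vadd x y) z') >= 5/3.
Proof.
  destruct x as [a1 a2], y as [b1 b2], z as [c1 c2], z' as [d1 d2].
  unfold cross, vnorm2, vadd; simpl. intros. apply core; auto.
Qed.

Theorem lemma3p2 (eps : R) (u : latpt -> R * R) (Tpos Tneg : ltriangle) :
  0 < eps ->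
  spin_field u ->
  is_triangle Tpos -> is_triangle Tneg ->
  share_side Tpos Tneg ->
  chi u Tpos >= 0 -> chi u Tneg <= 0 ->
  F_tri eps u Tpos + F_tri eps u Tneg >= 5 / 3 * eps.
Proof.
  intros Heps Hu _ _ [_ Hsh] Hp Hn.
  assert (Hc : 0 < 2 / (3 * sqrt 3)).
  { assert (0 < sqrt 3) by (apply sqrt_lt_R0; lra).
    apply Rdiv_lt_0_compat; lra. }
  unfold chi in Hp, Hn.
  unfold F_tri.
  rewrite <- Rmult_plus_distr_l.
  replace (5/3*eps) with (eps * (5/3)) by ring.
  apply Rle_ge, Rmult_le_compat_l; [lra|].
  apply Rge_le.
  destruct Tpos as [i j k]; destruct Tneg as [i' j' k']; simpl in *.
  assert (Hprod : forall A B : R, 2 / (3 * sqrt 3) * A >= 0 -> 2 / (3 * sqrt 3) * B <= 0 -> A * B <= 0).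
  { intros A B HA HB. assert (0 <= A) by nra. assert (B <= 0) by nra. nra. }
  pose proof (Hprod _ _ Hp Hn) as H. clear Hp Hn Hprod.
  unfold spin_field in Hu.
  destruct Hsh as [[E1 E2] | [[E1 E2] | [E1 E2]]]; subst.
  - apply HH; auto.
  - pose proof (HH (u j') (u k') (u i) (u i') (Hu _) (Hu _) (Hu _) (Hu _)) as G.
    destruct (u i) as [p1 p2], (u j') as [q1 q2], (u k') as [r1 r2], (u i') as [t1 t2].
    unfold cross, vnorm2, vadd in *; simpl in *.
    specialize (G ltac:(lra)). lra.
  - pose proof (HH (u k') (u i') (u j) (u j') (Hu _) (Hu _) (Hu _) (Hu _)) as G.
    destruct (u j) as [p1 p2], (u j') as [q1 q2], (u k') as [r1 r2], (u i') as [t1 t2].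
    unfold cross, vnorm2, vadd in *; simpl in *.
    specialize (G ltac:(lra)). lra.
Qed.
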